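(* Let $0<q<1$ and let $\rho_-=(\pi_+-\pi_-)/2:\mathcal{A}(S^2_q)\to\mathcal{B}(\hat{\mathcal{H}})$. Then $\rho_-$ maps $\mathcal{A}(S^2_q)$ into rapid decay matrices on $\hat{\mathcal{H}}$. Consequently, writing $\pi=\rho_+\otimes\mathrm{id}_{\mathbb{C}^2}+\rho_-\otimes\gamma$ on $\mathcal{H}=\hat{\mathcal{H}}\otimes\mathbb{C}^2$ with $\rho_+=(\pi_++\pi_-)/2$, $\gamma=\begin{pmatrix}1&0\\0&-1\end{pmatrix}$, $F=\begin{pmatrix}0&1\\1&0\end{pmatrix}$, one has $[F,\pi(x)]=2\rho_-(x)\otimes F\gamma$, which is trace class for all $x\in\mathcal{A}(S^2_q)$, and the Fredholm module $(\mathcal{H},F)$ over $\mathcal{A}(S^2_q)$ is finite summable.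
   Context: $\mathcal{A}(S^2_q)$ is the unital $*$-algebra generated by $a,a^*$ and $b=b^*$ with $ba=q^2ab$, $a^*a+b^2=1$, $q^4aa^*+b^2=q^4$. $\hat{\mathcal{H}}$ has orthonormal basis $|l,m\rangle$, $l\in\mathbb{N}+\tfrac12$, $m=-l,\dots,l$ (out-of-range vectors are $0$). With $[x]=(q^x-q^{-x})/(q-q^{-1})$, the representations $\pi_\pm$ on $\hat{\mathcal{H}}$ are: $\pi_\pm(a)|l,m\rangle=q^{m-l-\frac12}\frac{\sqrt{[l+m+1][l+m+2]}}{[2l+2]}|l+1,m+1\rangle-q^{m+l+\frac12}\frac{\sqrt{[l-m-1][l-m]}}{[2l]}|l-1,m+1\rangle\pm\frac{(1+q^2)q^{m-\frac12}}{[2l][2l+2]}\sqrt{[l+m+1][l-m]}\,|l,m+1\rangle$, $\pi_\pm(b)|l,m\rangle=-q^{m+1}\frac{\sqrt{[l+m+1][l-m+1]}}{[2l+2]}|l+1,m\rangle-q^{m+1}\frac{\sqrt{[l+m][l-m]}}{[2l]}|l-1,m\rangle\pm\frac{[l-m+1][l+m]-q^2[l-m][l+m+1]}{[2l][2l+2]}|l,m\rangle$. An operator $T$ on $\hat{\mathcal{H}}$ is a rapid decay matrix if $\sup|\langle l,m|T|l',m'\rangle|(l+l'+1)^p<\infty$ for all $p\in\mathbb{N}$. A Fredholm module $(\mathcal{H},F)$ is finite summable if for some $k$, $[F,x_0]\cdots[F,x_k]$ is trace class for all $x_j$ in the algebra. *)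

(* Defs.v *)
From Stdlib Require Import Reals Lra List ZArith.
From Coquelicot Require Import Coquelicot.
Import ListNotations.
Open Scope R_scope.

(** An operator is given by the (finite) expansion of
    the image of every basis vector: [T j = [(i1,c1);...]] means
    T|j> = sum c_k |i_k>. *)
Definition op (I : Type) := I -> list (I * C).

Section Ops.
Context {I : Type} (eqd : forall x y : I, {x = y} + {x <> y}).

Definition entry (T : op I) (i j : I) : C :=
  fold_right Cplus (RtoC 0)
    (map (fun p => if eqd (fst p) i then snd p else RtoC 0) (T j)).
End Ops.

Definition op_id {I} : op I := fun j => [(j, RtoC 1)].
Definition op_add {I} (S T : op I) : op I := fun j => S j ++ T j.
Definition op_scal {I} (c : C) (T : op I) : op I :=
  fun j => map (fun p => (fst p, Cmult c (snd p))) (T j).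
Definition op_comp {I} (S T : op I) : op I :=
  fun j => flat_map (fun p => map (fun r => (fst r, Cmult (snd p) (snd r)))
                                  (S (fst p))) (T j).
Definition op_comm {I} (S T : op I) : op I :=
  op_add (op_comp S T) (op_scal (RtoC (-1)) (op_comp T S)).
Definition op_tensor {I J} (A : op I) (B : op J) : op (I * J) :=
  fun jt => flat_map (fun p => map (fun r => ((fst p, fst r), Cmult (snd p) (snd r)))
                                   (B (snd jt))) (A (fst jt)).

(** * Basis of \hat H : |l,m>, l = n + 1/2 (n : nat), m = k + 1/2 (k : Z),
      with -l <= m <= l, i.e. -n-1 <= k <= n. *)
Definition idx := (nat * Z)%type.
Definition idx_eq_dec : forall x y : idx, {x = y} + {x <> y}.
Proof. decide equality; [apply Z.eq_dec | apply Nat.eq_dec]. Defined.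
Definition validb (i : idx) : bool :=
  (Z.leb (- Z.of_nat (fst i) - 1) (snd i) && Z.leb (snd i) (Z.of_nat (fst i)))%bool.
Definition lval (i : idx) : R := INR (fst i) + /2.
Definition mval (i : idx) : R := IZR (snd i) + /2.
Definition block (n : nat) : list idx :=
  map (fun j => (n, (Z.of_nat j - Z.of_nat n - 1)%Z)) (seq 0 (2 * n + 2)).

Definition qn (q x : R) : R := (Rpower q x - Rpower q (- x)) / (q - / q).

(** sign s = true for pi_+, false for pi_- *)
Definition sgn (s : bool) : R := if s then 1 else -1.

Section Gens.
Variable q : R.
Let br := qn q.

(** pi_s(a)|l,m> as a list of (target, coefficient) before dropping
    out-of-range vectors *)
Definition col_a_raw (s : bool) (j : idx) : list (idx * R) :=
  let l := lval j in let m := mval j in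
  let n := fst j in let k := snd j in
  [((S n, (k + 1)%Z),
     Rpower q (m - l - /2) * sqrt (br (l + m + 1) * br (l + m + 2)) / br (2 * l + 2))]
  ++ (match n with
      | O => []
      | S n' => [((n', (k + 1)%Z),
                  - (Rpower q (m + l + /2) * sqrt (br (l - m - 1) * br (l - m)) / br (2 * l)))]
      end)
  ++ [((n, (k + 1)%Z),
       sgn s * ((1 + q ^ 2) * Rpower q (m - /2) / (br (2 * l) * br (2 * l + 2))
                * sqrt (br (l + m + 1) * br (l - m))))].

Definition col_b_raw (s : bool) (j : idx) : list (idx * R) :=
  let l := lval j in let m := mval j in
  let n := fst j in let k := snd j in
  [((S n, k), - (Rpower q (m + 1) * sqrt (br (l + m + 1) * br (l - m + 1)) / br (2 * l + 2)))]
  ++ (match n with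
      | O => []
      | S n' => [((n', k), - (Rpower q (m + 1) * sqrt (br (l + m) * br (l - m)) / br (2 * l)))]
      end)
  ++ [((n, k), sgn s * ((br (l - m + 1) * br (l + m) - q ^ 2 * br (l - m) * br (l + m + 1))
                        / (br (2 * l) * br (2 * l + 2))))].

(** out-of-range vectors are 0 *)
Definition keep_valid (v : list (idx * R)) : list (idx * C) :=
  map (fun p => (fst p, RtoC (snd p))) (filter (fun p => validb (fst p)) v).

Definition op_a (s : bool) : op idx := fun j => keep_valid (col_a_raw s j).
Definition op_b (s : bool) : op idx := fun j => keep_valid (col_b_raw s j).

(** pi_s(a^* ) = pi_s(a)^* : <i|pi(a^* )|j> = conj <j|pi(a)|i>, where the only
    i with <j|pi(a)|i> possibly nonzero are (l+1,m-1), (l-1,m-1), (l,m-1). *)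
Definition sources_astar (j : idx) : list idx :=
  let n := fst j in let k := snd j in
  [(S n, (k - 1)%Z); (n, (k - 1)%Z)]
  ++ (match n with O => [] | S n' => [(n', (k - 1)%Z)] end).
Definition op_astar (s : bool) : op idx :=
  fun j => map (fun i => (i, Cconj (entry idx_eq_dec (op_a s) j i)))
               (filter validb (sources_astar j)).
End Gens.

(** * The algebra A(S^2_q): elements are represented by noncommutative
    polynomial expressions in the generators a, a^*, b (the representations
    pi_+- factor through the defining relations). *)
Inductive gen := Ga | Gastar | Gb.
Inductive AS2 : Type :=
| AOne : AS2
| AGen : gen -> AS2
| AScal : C -> AS2 -> AS2
| AAdd : AS2 -> AS2 -> AS2
| AMul : AS2 -> AS2 -> AS2.

Fixpoint interp {I} (g : gen -> op I) (x : AS2) : op I :=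
  match x with
  | AOne => op_id
  | AGen h => g h
  | AScal c y => op_scal c (interp g y)
  | AAdd y z => op_add (interp g y) (interp g z)
  | AMul y z => op_comp (interp g y) (interp g z)
  end.

Definition gen_op (q : R) (s : bool) (g : gen) : op idx :=
  match g with Ga => op_a q s | Gastar => op_astar q s | Gb => op_b q s end.

Definition pi_s (q : R) (s : bool) (x : AS2) : op idx := interp (gen_op q s) x.
Definition rho_plus (q : R) (x : AS2) : op idx :=
  op_scal (RtoC (/2)) (op_add (pi_s q true x) (pi_s q false x)).
Definition rho_minus (q : R) (x : AS2) : op idx :=
  op_scal (RtoC (/2)) (op_add (pi_s q true x) (op_scal (RtoC (-1)) (pi_s q false x))).

Definition rapid_decay (T : op idx) : Prop :=
  forall p : nat, exists M : R, forall i j : idx, validb i = true -> validb j = true ->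
    Cmod (entry idx_eq_dec T i j) * (lval i + lval j + 1) ^ p <= M.

(** * H = \hat H (x) C^2, basis |l,m> (x) e_t, t : bool (true = first vector) *)
Definition idx2 := (idx * bool)%type.
Definition idx2_eq_dec : forall x y : idx2, {x = y} + {x <> y}.
Proof. decide equality; [apply Bool.bool_dec | apply idx_eq_dec]. Defined.
Definition block2 (n : nat) : list idx2 :=
  flat_map (fun i => [(i, true); (i, false)]) (block n).

Definition id2 : op bool := op_id.
Definition gamma2 : op bool := fun t => [(t, RtoC (if t then 1 else -1))].
Definition F2 : op bool := fun t => [(negb t, RtoC 1)].

Definition FH : op idx2 := op_tensor op_id F2.
Definition piH (q : R) (x : AS2) : op idx2 :=
  op_add (op_tensor (rho_plus q x) id2) (op_tensor (rho_minus q x) gamma2).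

(** * Trace class operators (nuclear form), on a space whose orthonormal basis
    is the disjoint union of the finite blocks [blk n]:
    T = sum_n u_n <v_n, .> with u_n, v_n in l^2 and sum_n ||u_n|| ||v_n|| < oo. *)
Section TraceClass.
Context {I : Type} (eqd : forall x y : I, {x = y} + {x <> y}) (blk : nat -> list I).

Definition in_basis (i : I) : Prop := exists n, In i (blk n).
Definition blocknorm2 (u : I -> C) (n : nat) : R :=
  fold_right Rplus 0 (map (fun i => (Cmod (u i)) ^ 2) (blk n)).
Definition in_l2 (u : I -> C) : Prop := ex_series (blocknorm2 u).
Definition l2norm (u : I -> C) : R := sqrt (Series (blocknorm2 u)).

Definition trace_class (T : op I) : Prop :=
  exists u v : nat -> I -> C,
    (forall n, in_l2 (u n)) /\ (forall n, in_l2 (v n)) /\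
    ex_series (fun n => l2norm (u n) * l2norm (v n)) /\
    forall i j, in_basis i -> in_basis j ->
      is_series (fun n => Cmult (u n i) (Cconj (v n j))) (entry eqd T i j).
End TraceClass.

Definition trace_class_H (T : op idx2) : Prop := trace_class idx2_eq_dec block2 T.

Definition comm_prod (q : R) (xs : list AS2) : op idx2 :=
  fold_right (fun x acc => op_comp (op_comm FH (piH q x)) acc) op_id xs.

Definition finite_summable (q : R) : Prop :=
  exists k : nat, forall xs : list AS2, length xs = S k ->
    trace_class_H (comm_prod q xs).

(* Main.v *)
Require Import Defs.
From Stdlib Require Import Reals List ZArith Lia Lra.
From Coquelicot Require Import Coquelicot.
Import ListNotations.
Open Scope R_scope.

Section Vec.
Context {I : Type} (eqd : forall x y : I, {x = y} + {x <> y}).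
Definition vec (l : list (I * C)) (i : I) : C :=
  fold_right Cplus (RtoC 0) (map (fun p => if eqd (fst p) i then snd p else RtoC 0) l).

Lemma entry_vec T i j : entry eqd T i j = vec (T j) i.
Proof. reflexivity. Qed.

Lemma vec_app l1 l2 i : vec (l1 ++ l2) i = Cplus (vec l1 i) (vec l2 i).
Proof. induction l1 as [|p l IH]; simpl. unfold vec; simpl. ring.
unfold vec in *; simpl. rewrite IH. ring. Qed.

Lemma vec_scal c l i : vec (map (fun p => (fst p, Cmult c (snd p))) l) i = Cmult c (vec l i).
Proof. induction l as [|p l IH]; unfold vec in *; simpl. ring.
rewrite IH. destruct (eqd (fst p) i); ring. Qed.

Lemma entry_add S T i j : entry eqd (op_add S T) i j = Cplus (entry eqd S i j) (entry eqd T i j).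
Proof. unfold op_add. rewrite !entry_vec. apply vec_app. Qed.

Lemma entry_scal c T i j : entry eqd (op_scal c T) i j = Cmult c (entry eqd T i j).
Proof. unfold op_scal. rewrite !entry_vec. apply vec_scal. Qed.

Definition csum (l : list C) : C := fold_right Cplus (RtoC 0) l.

Lemma entry_comp S T i j : entry eqd (op_comp S T) i j =
  csum (map (fun p => Cmult (snd p) (entry eqd S i (fst p))) (T j)).
Proof. rewrite entry_vec. unfold op_comp. induction (T j) as [|p l IH]; simpl.
reflexivity. rewrite vec_app, IH, vec_scal. reflexivity. Qed.

Lemma entry_id i j : entry eqd op_id i j = if eqd j i then RtoC 1 else RtoC 0.
Proof. unfold entry, op_id; simpl. destruct (eqd j i); ring. Qed.
End Vec.

Lemma if_dec_irrel {A B : Type} (d1 d2 : forall x y : A, {x = y} + {x <> y}) (x y : A) (a b : B) :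
  (if d1 x y then a else b) = (if d2 x y then a else b).
Proof. destruct (d1 x y), (d2 x y); congruence. Qed.

Lemma vec_irrel {I} d1 d2 (l : list (I * C)) i : vec d1 l i = vec d2 l i.
Proof. induction l; unfold vec in *; simpl; auto. rewrite IHl. f_equal. apply if_dec_irrel. Qed.

Lemma vec_cons {I} d (p : I * C) l i : vec d (p :: l) i = Cplus (if d (fst p) i then snd p else RtoC 0) (vec d l i).
Proof. reflexivity. Qed.

Lemma entry_tensor {I J} (A : op I) (B : op J) d12 d1 d2 (i j : I) (t t' : J) :
  entry d12 (op_tensor A B) (i, t) (j, t') = Cmult (entry d1 A i j) (entry d2 B t t').
Proof. rewrite !entry_vec. unfold op_tensor; simpl.
induction (A j) as [|p l IH]; simpl. unfold vec; simpl; ring.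
rewrite vec_app, IH, vec_cons, Cmult_plus_distr_r. f_equal.
clear IH. induction (B t') as [|r l' IH']. unfold vec; simpl. destruct (d1 (fst p) i); ring.
simpl. rewrite !vec_cons, IH'. simpl.
destruct (d12 (fst p, fst r) (i, t)) as [E|E]; destruct (d1 (fst p) i) as [E1|E1];
 destruct (d2 (fst r) t) as [E2|E2]; try ring.
all: first [ injection E; intros; congruence | (exfalso; apply E; destruct p, r; simpl in *; subst; reflexivity) ].
Qed.

Lemma entry_F2 t t'' : entry Bool.bool_dec F2 t t'' = if Bool.bool_dec (negb t'') t then RtoC 1 else RtoC 0.
Proof. unfold entry, F2; simpl. destruct (Bool.bool_dec (negb t'') t); ring. Qed.

Lemma entry_FH (i1 k : idx) (t t'' : bool) :
  entry idx2_eq_dec FH (i1, t) (k, t'') =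
  if idx2_eq_dec (k, negb t'') (i1, t) then RtoC 1 else RtoC 0.
Proof. unfold FH. rewrite (entry_tensor _ _ _ idx_eq_dec Bool.bool_dec).
rewrite entry_id, entry_F2.
destruct (idx_eq_dec k i1) as [E1|E1], (Bool.bool_dec (negb t'') t) as [E2|E2], (idx2_eq_dec (k, negb t'') (i1, t)) as [E3|E3];
 subst; try congruence; try ring.
all: exfalso; injection E3; intros; congruence.
Qed.

Lemma entry_FH_left (P : op idx2) i1 t j :
  entry idx2_eq_dec (op_comp FH P) (i1, t) j = entry idx2_eq_dec P (i1, negb t) j.
Proof. rewrite entry_comp, entry_vec. induction (P j) as [|p l IH]. reflexivity.
unfold csum in *; cbn [map fold_right] in *. rewrite vec_cons, <- IH. destruct p as [[k t''] c]; cbn [fst snd]. rewrite entry_FH.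
destruct (idx2_eq_dec (k, negb t'') (i1, t)), (idx2_eq_dec (k, t'') (i1, negb t)).
- ring.
- exfalso. injection e; intros; subst. apply n. rewrite Bool.negb_involutive; reflexivity.
- exfalso. injection e; intros; subst. apply n. rewrite Bool.negb_involutive; reflexivity.
- ring.
Qed.

Lemma entry_FH_right (P : op idx2) i j1 t' :
  entry idx2_eq_dec (op_comp P FH) i (j1, t') = entry idx2_eq_dec P i (j1, negb t').
Proof. rewrite entry_comp. unfold FH, op_tensor, op_id, F2; simpl.
transitivity (Cplus (Cmult (Cmult (RtoC 1) (RtoC 1)) (entry idx2_eq_dec P i (j1, negb t'))) (RtoC 0)).
reflexivity. ring. Qed.

Lemma entry_id2 t t' : entry Bool.bool_dec id2 t t' = if Bool.bool_dec t' t then RtoC 1 else RtoC 0.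
Proof. apply entry_id. Qed.

Lemma entry_gamma t t' : entry Bool.bool_dec gamma2 t t' =
  if Bool.bool_dec t' t then RtoC (if t' then 1 else -1) else RtoC 0.
Proof. unfold entry, gamma2; simpl. destruct (Bool.bool_dec t' t); ring. Qed.

Lemma entry_Fg t t' : entry Bool.bool_dec (op_comp F2 gamma2) t t' =
  if Bool.bool_dec (negb t') t then RtoC (if t' then 1 else -1) else RtoC 0.
Proof. unfold entry, op_comp, gamma2, F2; simpl. destruct (Bool.bool_dec (negb t') t); ring. Qed.

Lemma part2 q x (i j : idx2) :
  entry idx2_eq_dec (op_comm FH (piH q x)) i j =
  entry idx2_eq_dec (op_scal (RtoC 2) (op_tensor (rho_minus q x) (op_comp F2 gamma2))) i j.
Proof. destruct i as [i1 t], j as [j1 t']. unfold op_comm.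
rewrite entry_add, entry_scal, entry_FH_left, entry_FH_right, entry_scal.
unfold piH. rewrite !entry_add.
rewrite !(entry_tensor _ _ _ idx_eq_dec Bool.bool_dec).
rewrite !entry_id2, !entry_gamma, entry_Fg.
set (a := entry idx_eq_dec (rho_plus q x) i1 j1).
set (b := entry idx_eq_dec (rho_minus q x) i1 j1).
destruct t, t'; simpl; apply injective_projections; simpl; ring.
Qed.

Section QBounds.
Context (q : R) (hq0 : 0 < q) (hq1 : q < 1).

Definition E (x : R) := Rpower q x.

Lemma E_pos x : 0 < E x.
Proof. unfold E, Rpower. apply exp_pos. Qed.

Lemma lnq_neg : ln q < 0.
Proof. rewrite <- ln_1. apply ln_increasing; lra. Qed.

Lemma E_decr x y : x <= y -> E y <= E x.
Proof. intros H. unfold E, Rpower. pose proof lnq_neg.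
destruct (Req_dec x y) as [->|Hn]. lra.
left. apply exp_increasing. nra. Qed.

Lemma E_plus x y : E (x + y) = E x * E y.
Proof. apply Rpower_plus. Qed.

Lemma E_0 : E 0 = 1.
Proof. apply Rpower_O; lra. Qed.

Lemma E_nat n : E (INR n) = q ^ n.
Proof. apply Rpower_pow; lra. Qed.

Lemma E_1 : E 1 = q.
Proof. apply Rpower_1; lra. Qed.

Definition cc := / q - q.
Lemma cc_pos : 0 < cc.
Proof. unfold cc. assert (1 < / q). { rewrite <- Rinv_1. apply Rinv_lt_contravar; lra. } lra. Qed.

Definition cup := (1 + / (q * q)) / cc.
Definition clo := (1 - q * q) / cc.
Lemma cup_pos : 0 < cup.
Proof. unfold cup. pose proof cc_pos. assert (0 < / (q*q)) by (apply Rinv_0_lt_compat; nra).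
apply Rdiv_lt_0_compat; lra. Qed.
Lemma clo_pos : 0 < clo.
Proof. unfold clo. pose proof cc_pos. apply Rdiv_lt_0_compat; nra. Qed.

Lemma qn_alt x : qn q x = (E (- x) - E x) / cc.
Proof. pose proof cc_pos. unfold qn. fold (E x) (E (-x)).
replace (q - / q) with (- cc) by (unfold cc; ring). field. lra. Qed.

Lemma qn_up x : -1 <= x -> Rabs (qn q x) <= cup * E (- x).
Proof. intros H. rewrite qn_alt. pose proof cc_pos.
assert (H1 : E x <= E (-1)) by (apply E_decr; lra).
assert (H2 : E 1 <= E (- x)) by (apply E_decr; lra).
assert (Hm1 : E (-1) = / q) by (unfold E; replace (-1) with (- (1)) by ring; rewrite (Rpower_Ropp q 1), Rpower_1; lra).
rewrite E_1 in H2. rewrite Hm1 in H1.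
pose proof (E_pos x). pose proof (E_pos (-x)).
assert (Hb : / q <= E (- x) / (q * q)).
{ apply (Rmult_le_reg_r (q*q)). nra. field_simplify; try lra. }
unfold Rdiv. rewrite Rabs_mult, (Rabs_right (/ cc)) by (left; apply Rinv_0_lt_compat; lra).
unfold cup. unfold Rdiv. 
apply Rle_trans with ((E (-x) + E x) * / cc).
apply Rmult_le_compat_r. left; apply Rinv_0_lt_compat; lra.
apply Rabs_le; lra.
assert (E (-x) + E x <= (1 + / (q*q)) * E (-x)).
{ unfold Rdiv in Hb. rewrite Rmult_plus_distr_r, Rmult_1_l. rewrite (Rmult_comm (/ (q*q))). lra. }
assert (0 < / cc) by (apply Rinv_0_lt_compat; lra). nra.
Qed.

Lemma qn_low x : 1 <= x -> clo * E (- x) <= qn q x.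
Proof. intros H. rewrite qn_alt. pose proof cc_pos.
assert (Hx : E x = E (- x) * E (2 * x)) by (rewrite <- E_plus; f_equal; ring).
assert (H2 : E (2 * x) <= E 2) by (apply E_decr; lra).
assert (E 2 = q * q) by (unfold E; replace 2 with (INR 2) by (simpl; ring); rewrite Rpower_pow; simpl; lra).
pose proof (E_pos (-x)). unfold clo, Rdiv.
assert (E x <= E (-x) * (q*q)) by (rewrite Hx; apply Rmult_le_compat_l; lra).
assert (0 < / cc) by (apply Rinv_0_lt_compat; lra).
assert ((1 - q*q) * E (-x) <= E (-x) - E x) by nra. nra.
Qed.

Lemma sqrt_qn a b : -1 <= a -> -1 <= b ->
  sqrt (qn q a * qn q b) <= cup * E (- ((a + b) / 2)).
Proof. intros Ha Hb. pose proof cup_pos. pose proof (E_pos (- ((a+b)/2))).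
apply Rle_trans with (sqrt (Rabs (qn q a * qn q b))).
{ destruct (Rle_dec 0 (qn q a * qn q b)). rewrite Rabs_right by lra; lra.
  rewrite sqrt_neg_0 by lra. apply sqrt_pos. }
rewrite <- (sqrt_square (cup * E (- ((a + b) / 2)))) by nra.
apply sqrt_le_1_alt. rewrite Rabs_mult.
assert (E (-a) * E (-b) = E (- ((a + b) / 2)) * E (- ((a + b) / 2))) by (rewrite <- !E_plus; f_equal; field).
pose proof (qn_up a Ha). pose proof (qn_up b Hb).
apply Rle_trans with ((cup * E (-a)) * (cup * E (-b))).
apply Rmult_le_compat; try apply Rabs_pos; lra.
replace (cup * E (- a) * (cup * E (- b))) with (cup * cup * (E (-a) * E (-b))) by ring. rewrite H1. lra.
Qed.

Lemma frac_bound al S D s be d ga : Rabs S <= s * E be -> 0 < d -> d * E ga <= D ->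
  Rabs (E al * S / D) <= s / d * E (al + be - ga).
Proof. intros HS Hd HD. pose proof (E_pos ga). pose proof (E_pos al). pose proof (E_pos be).
assert (0 < D) by nra.
replace (E (al + be - ga)) with (E al * E be / E ga).
2:{ unfold Rminus. rewrite !E_plus. unfold E. rewrite (Rpower_Ropp q ga). reflexivity. }
unfold Rdiv. rewrite !Rabs_mult, (Rabs_right (E al)) by lra. rewrite (Rabs_right (/ D)) by (left; apply Rinv_0_lt_compat; lra).
assert (/ D <= / (d * E ga)) by (apply Rinv_le_contravar; nra).
assert (0 <= s * E be) by (pose proof (Rabs_pos S); lra).
assert (0 < / (d * E ga)) by (apply Rinv_0_lt_compat; nra).
apply Rle_trans with (E al * (s * E be) * / (d * E ga)).
{ apply Rmult_le_compat. pose proof (Rabs_pos S); nra. left; apply Rinv_0_lt_compat; lra.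
  apply Rmult_le_compat_l; lra. lra. }
right. rewrite Rinv_mult. field. split; lra.
Qed.

End QBounds.

Section Coefs.
Context (q : R) (hq0 : 0 < q) (hq1 : q < 1).
Context (l m : R) (n : nat) (Hl : l = INR n + /2) (hlm1 : 0 <= l + m) (hlm2 : 0 <= l - m).

Definition Kg := cup q / clo q + (1 + q ^ 2) * (cup q / (clo q * clo q)) + cup q * cup q * (1 + q ^ 2) / (clo q * clo q).

Lemma Kg_parts : 0 <= cup q / clo q /\ 0 <= (1 + q ^ 2) * (cup q / (clo q * clo q)) /\
   0 <= cup q * cup q * (1 + q ^ 2) / (clo q * clo q).
Proof. pose proof (cup_pos q hq0 hq1). pose proof (clo_pos q hq0 hq1).
assert (0 < clo q * clo q) by nra. assert (0 < 1 + q^2) by nra.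
repeat split; left.
apply Rdiv_lt_0_compat; lra.
apply Rmult_lt_0_compat. lra. apply Rdiv_lt_0_compat; lra.
apply Rdiv_lt_0_compat; try lra. apply Rmult_lt_0_compat. nra. lra. Qed.

Lemma Kg_pos : 0 <= Kg.
Proof. pose proof Kg_parts. unfold Kg; lra. Qed.

Lemma hn : 0 <= INR n. Proof. apply pos_INR. Qed.

Lemma E_le_1 x : 0 <= x -> E q x <= 1.
Proof. intros. rewrite <- (E_0 q hq0). apply E_decr; lra. Qed.

Lemma E_le_pow x : INR n <= x -> E q x <= q ^ n.
Proof. intros. rewrite <- (E_nat q hq0). apply E_decr; lra. Qed.

Lemma den_low : clo q * clo q * E q (- (2 * l) + - (2 * l + 2)) <= qn q (2 * l) * qn q (2 * l + 2).
Proof. pose proof hn. pose proof (qn_low q hq0 hq1 (2*l) ltac:(lra)). pose proof (qn_low q hq0 hq1 (2*l+2) ltac:(lra)).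
pose proof (clo_pos q hq0 hq1). pose proof (E_pos q (-(2*l))). pose proof (E_pos q (-(2*l+2))).
rewrite E_plus. replace (clo q * clo q * (E q (- (2 * l)) * E q (- (2 * l + 2)))) with ((clo q * E q (- (2 * l))) * (clo q * E q (- (2 * l + 2)))) by ring.
apply Rmult_le_compat; nra. Qed.

Lemma bA1 : Rabs (Rpower q (m - l - /2) * sqrt (qn q (l + m + 1) * qn q (l + m + 2)) / qn q (2 * l + 2)) <= Kg.
Proof using q hq0 hq1 l m n Hl hlm1 hlm2. pose proof hn. pose proof Kg_parts.
change (Rpower q (m - l - /2)) with (E q (m - l - /2)).
eapply Rle_trans. apply (frac_bound q _ _ _ (cup q) (- ((l + m + 1 + (l + m + 2)) / 2)) (clo q) (- (2 * l + 2))).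
- rewrite Rabs_right by (apply Rle_ge, sqrt_pos). apply sqrt_qn; lra.
- apply clo_pos; lra.
- apply qn_low; lra.
- replace (m - l - / 2 + - ((l + m + 1 + (l + m + 2)) / 2) - - (2 * l + 2)) with 0 by field.
  rewrite E_0 by lra. unfold Kg. lra.
Qed.

Lemma bA2 : Rabs (- (Rpower q (m + l + /2) * sqrt (qn q (l - m - 1) * qn q (l - m)) / qn q (2 * l))) <= Kg.
Proof using q hq0 hq1 l m n Hl hlm1 hlm2. pose proof hn. pose proof Kg_parts. rewrite Rabs_Ropp.
change (Rpower q (m + l + /2)) with (E q (m + l + /2)).
eapply Rle_trans. apply (frac_bound q _ _ _ (cup q) (- ((l - m - 1 + (l - m)) / 2)) (clo q) (- (2 * l))).
- rewrite Rabs_right by (apply Rle_ge, sqrt_pos). apply sqrt_qn; lra.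
- apply clo_pos; lra.
- apply qn_low; lra.
- pose proof (E_le_1 (m + l + / 2 + - ((l - m - 1 + (l - m)) / 2) - - (2 * l)) ltac:(lra)).
  assert (0 < cup q / clo q) by (apply Rdiv_lt_0_compat; [apply cup_pos|apply clo_pos]; lra).
  unfold Kg. nra.
Qed.

Lemma bB1 : Rabs (- (Rpower q (m + 1) * sqrt (qn q (l + m + 1) * qn q (l - m + 1)) / qn q (2 * l + 2))) <= Kg.
Proof using q hq0 hq1 l m n Hl hlm1 hlm2. pose proof hn. pose proof Kg_parts. rewrite Rabs_Ropp.
change (Rpower q (m + 1)) with (E q (m + 1)).
eapply Rle_trans. apply (frac_bound q _ _ _ (cup q) (- ((l + m + 1 + (l - m + 1)) / 2)) (clo q) (- (2 * l + 2))).
- rewrite Rabs_right by (apply Rle_ge, sqrt_pos). apply sqrt_qn; lra.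
- apply clo_pos; lra.
- apply qn_low; lra.
- pose proof (E_le_1 (m + 1 + - ((l + m + 1 + (l - m + 1)) / 2) - - (2 * l + 2)) ltac:(lra)).
  assert (0 < cup q / clo q) by (apply Rdiv_lt_0_compat; [apply cup_pos|apply clo_pos]; lra).
  unfold Kg. nra.
Qed.

Lemma bB2 : Rabs (- (Rpower q (m + 1) * sqrt (qn q (l + m) * qn q (l - m)) / qn q (2 * l))) <= Kg.
Proof using q hq0 hq1 l m n Hl hlm1 hlm2. pose proof hn. pose proof Kg_parts. rewrite Rabs_Ropp.
change (Rpower q (m + 1)) with (E q (m + 1)).
eapply Rle_trans. apply (frac_bound q _ _ _ (cup q) (- ((l + m + (l - m)) / 2)) (clo q) (- (2 * l))).
- rewrite Rabs_right by (apply Rle_ge, sqrt_pos). apply sqrt_qn; lra.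
- apply clo_pos; lra.
- apply qn_low; lra.
- pose proof (E_le_1 (m + 1 + - ((l + m + (l - m)) / 2) - - (2 * l)) ltac:(lra)).
  assert (0 < cup q / clo q) by (apply Rdiv_lt_0_compat; [apply cup_pos|apply clo_pos]; lra).
  unfold Kg. nra.
Qed.

Lemma bA3 : Rabs ((1 + q ^ 2) * Rpower q (m - /2) / (qn q (2 * l) * qn q (2 * l + 2))
                * sqrt (qn q (l + m + 1) * qn q (l - m))) <= Kg * q ^ n.
Proof using q hq0 hq1 l m n Hl hlm1 hlm2. pose proof hn. pose proof Kg_parts. pose proof den_low.
pose proof (clo_pos q hq0 hq1). pose proof (E_pos q (- (2 * l) + - (2 * l + 2))).
change (Rpower q (m - /2)) with (E q (m - /2)).
replace ((1 + q ^ 2) * E q (m - / 2) / (qn q (2 * l) * qn q (2 * l + 2)) * sqrt (qn q (l + m + 1) * qn q (l - m)))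
  with ((1 + q ^ 2) * (E q (m - / 2) * sqrt (qn q (l + m + 1) * qn q (l - m)) / (qn q (2 * l) * qn q (2 * l + 2)))).
2:{ pose proof (qn_low q hq0 hq1 (2*l) ltac:(lra)). pose proof (qn_low q hq0 hq1 (2*l+2) ltac:(lra)).
  pose proof (E_pos q (-(2*l))). pose proof (E_pos q (-(2*l+2))).
  field. split; nra. }
rewrite Rabs_mult, (Rabs_right (1 + q^2)) by nra.
eapply Rle_trans. apply Rmult_le_compat_l. nra.
apply (frac_bound q _ _ _ (cup q) (- ((l + m + 1 + (l - m)) / 2)) (clo q * clo q) (- (2 * l) + - (2 * l + 2))).
- rewrite Rabs_right by (apply Rle_ge, sqrt_pos). apply sqrt_qn; lra.
- nra.
- exact den_low.
- pose proof (E_le_pow (m - / 2 + - ((l + m + 1 + (l - m)) / 2) - (- (2 * l) + - (2 * l + 2))) ltac:(lra)).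
  pose proof (E_pos q (m - / 2 + - ((l + m + 1 + (l - m)) / 2) - (- (2 * l) + - (2 * l + 2)))).
  assert (0 <= q ^ n) by (apply pow_le; lra).
  match type of H4 with ?a <= _ => set (X := a) in * end. set (A := (1 + q ^ 2) * (cup q / (clo q * clo q))) in *.
  replace ((1 + q ^ 2) * (cup q / (clo q * clo q) * X)) with (A * X) by (unfold A; ring).
  assert (A <= Kg) by (unfold Kg, A; lra).
  apply Rle_trans with (A * q ^ n). apply Rmult_le_compat_l; lra. apply Rmult_le_compat_r; lra.
Qed.

Lemma bB3 : Rabs ((qn q (l - m + 1) * qn q (l + m) - q ^ 2 * qn q (l - m) * qn q (l + m + 1))
                  / (qn q (2 * l) * qn q (2 * l + 2))) <= Kg * q ^ n.
Proof using q hq0 hq1 l m n Hl hlm1 hlm2. pose proof hn. pose proof Kg_parts. pose proof den_low.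
pose proof (clo_pos q hq0 hq1). pose proof (cup_pos q hq0 hq1).
pose proof (E_pos q (- (2 * l) + - (2 * l + 2))).
set (Nm := qn q (l - m + 1) * qn q (l + m) - q ^ 2 * qn q (l - m) * qn q (l + m + 1)).
replace (Nm / (qn q (2 * l) * qn q (2 * l + 2))) with (E q 0 * Nm / (qn q (2 * l) * qn q (2 * l + 2))).
2:{ rewrite (E_0 q hq0). unfold Rdiv. rewrite Rmult_1_l. reflexivity. }
eapply Rle_trans.
apply (frac_bound q _ _ _ (cup q * cup q * (1 + q^2)) (- (2 * l + 1)) (clo q * clo q) (- (2 * l) + - (2 * l + 2))).
- unfold Nm. 
  pose proof (qn_up q hq0 hq1 (l - m + 1) ltac:(lra)). pose proof (qn_up q hq0 hq1 (l + m) ltac:(lra)).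
  pose proof (qn_up q hq0 hq1 (l - m) ltac:(lra)). pose proof (qn_up q hq0 hq1 (l + m + 1) ltac:(lra)).
  assert (E1 : E q (- (l - m + 1)) * E q (- (l + m)) = E q (- (2 * l + 1))) by (rewrite <- E_plus; f_equal; ring).
  assert (E2 : E q (- (l - m)) * E q (- (l + m + 1)) = E q (- (2 * l + 1))) by (rewrite <- E_plus; f_equal; ring).
  eapply Rle_trans. apply Rabs_triang. rewrite Rabs_Ropp, !Rabs_mult.
  rewrite (Rabs_right (q^2)) by (apply Rle_ge, pow_le; lra).
  assert (Rabs (qn q (l - m + 1)) * Rabs (qn q (l + m)) <= cup q * E q (- (l - m + 1)) * (cup q * E q (- (l + m)))).
  { apply Rmult_le_compat; try apply Rabs_pos; lra. }
  assert (Rabs (qn q (l - m)) * Rabs (qn q (l + m + 1)) <= cup q * E q (- (l - m)) * (cup q * E q (- (l + m + 1)))).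
  { apply Rmult_le_compat; try apply Rabs_pos; lra. }
  assert (0 <= q^2) by (apply pow_le; lra).
  replace (cup q * E q (- (l - m + 1)) * (cup q * E q (- (l + m)))) with (cup q * cup q * E q (- (2 * l + 1))) in * by (rewrite <- E1; ring).
  replace (cup q * E q (- (l - m)) * (cup q * E q (- (l + m + 1)))) with (cup q * cup q * E q (- (2 * l + 1))) in * by (rewrite <- E2; ring).
  nra.
- nra.
- exact den_low.
- pose proof (E_le_pow (0 + - (2 * l + 1) - (- (2 * l) + - (2 * l + 2))) ltac:(lra)).
  pose proof (E_pos q (0 + - (2 * l + 1) - (- (2 * l) + - (2 * l + 2)))).
  assert (0 <= q ^ n) by (apply pow_le; lra).
  unfold Kg. nra.
Qed.

End Coefs.

Definition Rel (q : R) (d : nat) (K : R) (j : idx) (p p' : idx * C) : Prop :=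
  fst p = fst p' /\ validb (fst p) = true /\ (fst (fst p) <= fst j + d)%nat /\
  (fst j <= fst (fst p) + d)%nat /\ Cmod (snd p) <= K /\ Cmod (snd p') <= K /\
  Cmod (Cminus (snd p) (snd p')) <= K * q ^ (fst j).

Definition Inv (q : R) (T T' : op idx) : Prop :=
  exists d L K, 0 <= K /\ forall j, validb j = true ->
    (length (T j) <= L)%nat /\ Forall2 (Rel q d K j) (T j) (T' j).

Definition RelR (q : R) (K : R) (j : idx) (p p' : idx * R) : Prop :=
  fst p = fst p' /\ (fst (fst p) <= fst j + 1)%nat /\
  (fst j <= fst (fst p) + 1)%nat /\ Rabs (snd p) <= K /\ Rabs (snd p') <= K /\
  Rabs (snd p - snd p') <= K * q ^ (fst j).

Lemma Cminus_RtoC a b : Cminus (RtoC a) (RtoC b) = RtoC (a - b).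
Proof. apply injective_projections; simpl; ring. Qed.

Lemma keep_valid_rel q K j l l' : Forall2 (RelR q K j) l l' ->
  Forall2 (Rel q 1 K j) (keep_valid l) (keep_valid l').
Proof. induction 1 as [|x y l l' H H0 IH]. constructor.
destruct H as [Hf [H1 [H2 [H3 [H4 H5]]]]].
unfold keep_valid in *; simpl. rewrite <- Hf.
destruct (validb (fst x)) eqn:Ev; simpl; auto.
constructor; auto. unfold Rel; simpl. rewrite Cminus_RtoC, !Cmod_R. repeat split; auto.
Qed.

Lemma keep_valid_len l : (length (keep_valid l) <= length l)%nat.
Proof. unfold keep_valid. rewrite length_map. apply filter_length_le. Qed.

Lemma valid_R (j : idx) : validb j = true ->
  0 <= INR (fst j) + /2 + (IZR (snd j) + /2) /\ 0 <= INR (fst j) + /2 - (IZR (snd j) + /2).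
Proof. destruct j as [n k]; unfold validb; simpl. intros H.
apply andb_prop in H. destruct H as [H1 H2]. apply Z.leb_le in H1, H2.
apply IZR_le in H1. apply IZR_le in H2. rewrite <- INR_IZR_INZ in H2.
rewrite minus_IZR, opp_IZR, <- INR_IZR_INZ in H1. split; lra. Qed.

Lemma qpow_le1 q n : 0 < q -> q <= 1 -> q ^ n <= 1.
Proof. intros. rewrite <- (pow1 n). apply pow_incr; lra. Qed.

Lemma qpow_anti q a b : 0 < q -> q <= 1 -> (b <= a)%nat -> q ^ a <= q ^ b.
Proof. intros. replace a with (b + (a - b))%nat by lia. rewrite pow_add.
pose proof (qpow_le1 q (a - b) H H0). pose proof (pow_le q b ltac:(lra)). nra. Qed.

Lemma RelR_same q K (j i : idx) c : 0 < q -> (fst i <= fst j + 1)%nat -> (fst j <= fst i + 1)%nat ->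
  Rabs c <= K -> RelR q K j (i, c) (i, c).
Proof. intros. unfold RelR; simpl. unfold Rminus. rewrite Rplus_opp_r, Rabs_R0.
pose proof (pow_le q (fst j) ltac:(lra)). pose proof (Rabs_pos c). repeat split; auto; nra. Qed.

Lemma RelR_sgn q K (j i : idx) X : 0 < q -> q < 1 -> (fst i <= fst j + 1)%nat -> (fst j <= fst i + 1)%nat ->
  Rabs X <= K * q ^ (fst j) -> RelR q (2 * K) j (i, sgn true * X) (i, sgn false * X).
Proof. intros. unfold RelR, sgn; simpl. pose proof (qpow_le1 q (fst j) H ltac:(lra)).
pose proof (pow_lt q (fst j) ltac:(lra)). pose proof (Rabs_pos X).
replace (1 * X - -1 * X) with (2 * X) by ring.
replace (-1 * X) with (- X) by ring. rewrite Rabs_Ropp. rewrite Rmult_1_l.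
assert (0 <= K) by (destruct (Rle_dec 0 K); [auto| nra]).
repeat split; auto; try nra.
rewrite Rabs_mult, (Rabs_right 2) by lra. nra. Qed.

Lemma colA_rel q (hq0 : 0 < q) (hq1 : q < 1) j : validb j = true ->
  Forall2 (RelR q (2 * Kg q) j) (col_a_raw q true j) (col_a_raw q false j).
Proof. intros Hv. pose proof (valid_R j Hv) as [H1 H2]. pose proof (Kg_pos q hq0 hq1) as HK.
destruct j as [n k]. unfold col_a_raw, lval, mval. cbn [fst snd] in *.
set (l := INR n + /2) in *. set (m := IZR k + /2) in *.
pose proof (qpow_le1 q n hq0 ltac:(lra)) as Hp1. pose proof (pow_le q n ltac:(lra)) as Hp0.
pose proof (bA1 q hq0 hq1 l m n eq_refl H1 H2).
pose proof (bA2 q hq0 hq1 l m n eq_refl H1 H2).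
pose proof (bA3 q hq0 hq1 l m n eq_refl H1 H2).
apply Forall2_app. constructor; [|constructor]. apply RelR_same; cbn [fst snd]; try lia; lra.
apply Forall2_app. destruct n as [|n']. constructor. constructor; [|constructor]. apply RelR_same; cbn [fst snd]; try lia; lra.
constructor; [|constructor]. apply RelR_sgn; cbn [fst snd]; try lia; lra.
Qed.

Lemma colB_rel q (hq0 : 0 < q) (hq1 : q < 1) j : validb j = true ->
  Forall2 (RelR q (2 * Kg q) j) (col_b_raw q true j) (col_b_raw q false j).
Proof. intros Hv. pose proof (valid_R j Hv) as [H1 H2]. pose proof (Kg_pos q hq0 hq1) as HK.
destruct j as [n k]. unfold col_b_raw, lval, mval. cbn [fst snd] in *.
set (l := INR n + /2) in *. set (m := IZR k + /2) in *.
pose proof (qpow_le1 q n hq0 ltac:(lra)) as Hp1. pose proof (pow_le q n ltac:(lra)) as Hp0.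
pose proof (bB1 q hq0 hq1 l m n eq_refl H1 H2).
pose proof (bB2 q hq0 hq1 l m n eq_refl H1 H2).
pose proof (bB3 q hq0 hq1 l m n eq_refl H1 H2).
apply Forall2_app. constructor; [|constructor]. apply RelR_same; cbn [fst snd]; try lia; lra.
apply Forall2_app. destruct n as [|n']. constructor. constructor; [|constructor]. apply RelR_same; cbn [fst snd]; try lia; lra.
constructor; [|constructor]. apply RelR_sgn; cbn [fst snd]; try lia; lra.
Qed.

Lemma vec_bound {I} eqd (l : list (I * C)) i K : 0 <= K -> List.Forall (fun p => Cmod (snd p) <= K) l ->
  Cmod (vec eqd l i) <= INR (length l) * K.
Proof. intros HK. induction 1 as [|p l Hp Hl IH]. unfold vec; simpl. rewrite Cmod_0. lra.
rewrite vec_cons. eapply Rle_trans. apply Cmod_triangle. cbn [length]. rewrite S_INR.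
assert (Cmod (if eqd (fst p) i then snd p else RtoC 0) <= K).
{ destruct (eqd (fst p) i); auto. rewrite Cmod_0; auto. } lra. Qed.

Lemma vec_diff {I} eqd (l l' : list (I * C)) i B : 0 <= B ->
  Forall2 (fun p p' => fst p = fst p' /\ Cmod (Cminus (snd p) (snd p')) <= B) l l' ->
  Cmod (Cminus (vec eqd l i) (vec eqd l' i)) <= INR (length l) * B.
Proof. intros HB. induction 1 as [|p p' l l' [Hf Hp] Hl IH].
unfold vec; simpl. replace (Cminus (RtoC 0) (RtoC 0)) with (RtoC 0) by (apply injective_projections; simpl; ring).
rewrite Cmod_0. lra.
rewrite !vec_cons. rewrite <- Hf.
replace (Cminus (Cplus (if eqd (fst p) i then snd p else RtoC 0) (vec eqd l i))
                (Cplus (if eqd (fst p) i then snd p' else RtoC 0) (vec eqd l' i)))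
  with (Cplus (if eqd (fst p) i then Cminus (snd p) (snd p') else RtoC 0) (Cminus (vec eqd l i) (vec eqd l' i))).
2:{ destruct (eqd (fst p) i); unfold Cminus; ring. }
eapply Rle_trans. apply Cmod_triangle. cbn [length]. rewrite S_INR.
assert (Cmod (if eqd (fst p) i then Cminus (snd p) (snd p') else RtoC 0) <= B).
{ destruct (eqd (fst p) i); auto. rewrite Cmod_0; auto. } lra. Qed.

Lemma vec_zero {I} eqd (l : list (I * C)) i : List.Forall (fun p => fst p <> i) l -> vec eqd l i = RtoC 0.
Proof. induction 1. reflexivity. rewrite vec_cons, IHForall. destruct (eqd (fst x) i). contradiction.
apply injective_projections; simpl; ring. Qed.

Lemma Forall2_Forall_l {A B} (R : A -> B -> Prop) (P : A -> Prop) l l' :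
  Forall2 R l l' -> (forall a b, R a b -> P a) -> List.Forall P l.
Proof. induction 1; constructor; eauto. Qed.

Lemma Forall2_Forall_r {A B} (R : A -> B -> Prop) (P : B -> Prop) l l' :
  Forall2 R l l' -> (forall a b, R a b -> P b) -> List.Forall P l'.
Proof. induction 1; constructor; eauto. Qed.

Lemma Forall2_impl' {A B} (R R' : A -> B -> Prop) l l' :
  Forall2 R l l' -> (forall a b, R a b -> R' a b) -> Forall2 R' l l'.
Proof. induction 1; constructor; eauto. Qed.

Lemma Forall2_map' {A B A' B'} (R : A -> B -> Prop) (R' : A' -> B' -> Prop) f g l l' :
  Forall2 R l l' -> (forall a b, R a b -> R' (f a) (g b)) -> Forall2 R' (map f l) (map g l').
Proof. induction 1; simpl; constructor; eauto. Qed.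

Lemma Forall2_map_same {A A' B'} (R' : A' -> B' -> Prop) (f : A -> A') g l :
  (forall a, In a l -> R' (f a) (g a)) -> Forall2 R' (map f l) (map g l).
Proof. induction l; simpl; intros; constructor; auto. Qed.

Lemma Forall2_flat_map' {A B A' B'} (P : A -> B -> Prop) (R : A' -> B' -> Prop) f g l l' :
  Forall2 P l l' -> (forall a b, P a b -> Forall2 R (f a) (g b)) -> Forall2 R (flat_map f l) (flat_map g l').
Proof. induction 1; simpl; intros; [constructor|]. apply Forall2_app; auto. Qed.

Lemma length_flat_map_le {A B} (f : A -> list B) l M :
  (forall a, In a l -> (length (f a) <= M)%nat) -> (length (flat_map f l) <= length l * M)%nat.
Proof. induction l; simpl; intros; auto. rewrite length_app.
specialize (IHl (fun a0 h => H a0 (or_intror h))). specialize (H a (or_introl eq_refl)). lia. Qed.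

Lemma Rel_mono q d d' K K' j p p' : 0 < q -> (d <= d')%nat -> K <= K' -> Rel q d K j p p' -> Rel q d' K' j p p'.
Proof. intros Hq Hd HK [H1 [H2 [H3 [H4 [H5 [H6 H7]]]]]]. pose proof (pow_le q (fst j) ltac:(lra)).
repeat split; auto; try lia; try lra. nra. Qed.

Lemma len_col_a q s j : (length (col_a_raw q s j) <= 3)%nat.
Proof. unfold col_a_raw. destruct (fst j); simpl; lia. Qed.
Lemma len_col_b q s j : (length (col_b_raw q s j) <= 3)%nat.
Proof. unfold col_b_raw. destruct (fst j); simpl; lia. Qed.

Lemma Inv_a q : 0 < q -> q < 1 -> forall j, validb j = true ->
  (length (op_a q true j) <= 3)%nat /\ Forall2 (Rel q 1 (2 * Kg q) j) (op_a q true j) (op_a q false j).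
Proof. intros hq0 hq1 j Hv. unfold op_a. split.
eapply Nat.le_trans. apply keep_valid_len. apply len_col_a.
apply keep_valid_rel. apply colA_rel; auto. Qed.

Lemma Inv_b q : 0 < q -> q < 1 -> Inv q (op_b q true) (op_b q false).
Proof. intros hq0 hq1. exists 1%nat, 3%nat, (2 * Kg q). split. pose proof (Kg_pos q hq0 hq1); lra.
intros j Hv. unfold op_b. split.
eapply Nat.le_trans. apply keep_valid_len. apply len_col_b.
apply keep_valid_rel. apply colB_rel; auto. Qed.

Lemma Inv_a' q : 0 < q -> q < 1 -> Inv q (op_a q true) (op_a q false).
Proof. intros hq0 hq1. exists 1%nat, 3%nat, (2 * Kg q). split. pose proof (Kg_pos q hq0 hq1); lra.
apply Inv_a; auto. Qed.

Lemma sources_bound j i : In i (sources_astar j) -> (fst i <= fst j + 1)%nat /\ (fst j <= fst i + 1)%nat.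
Proof. destruct j as [n k]; unfold sources_astar; simpl. destruct n as [|n']; simpl;
intros H; repeat destruct H as [H|H]; subst; simpl; try lia; contradiction. Qed.

Lemma Inv_astar q : 0 < q -> q < 1 -> Inv q (op_astar q true) (op_astar q false).
Proof. intros hq0 hq1. pose proof (Kg_pos q hq0 hq1) as HK.
exists 1%nat, 3%nat, (6 * Kg q / q). split. apply Rdiv_le_0_compat; lra.
intros j Hv. unfold op_astar. split.
{ rewrite length_map. eapply Nat.le_trans. apply filter_length_le.
  destruct j as [n k]; destruct n; simpl; lia. }
apply Forall2_map_same. intros i Hi. apply filter_In in Hi. destruct Hi as [Hi Hvi].
destruct (sources_bound j i Hi) as [B1 B2].
destruct (Inv_a q hq0 hq1 i Hvi) as [Hl HF].
rewrite !entry_vec.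
assert (Hlen : INR (length (op_a q true i)) <= 3) by (replace 3 with (INR 3) by (simpl; ring); apply le_INR; auto).
assert (Hb1 : Cmod (vec idx_eq_dec (op_a q true i) j) <= 3 * (2 * Kg q)).
{ eapply Rle_trans. apply (vec_bound _ _ _ (2 * Kg q)). lra. eapply Forall2_Forall_l. exact HF.
  intros a b Hr; apply Hr. apply Rmult_le_compat_r; lra. }
assert (Hb2 : Cmod (vec idx_eq_dec (op_a q false i) j) <= 3 * (2 * Kg q)).
{ eapply Rle_trans. apply (vec_bound _ _ _ (2 * Kg q)). lra. eapply Forall2_Forall_r. exact HF.
  intros a b Hr; apply Hr. rewrite <- (Forall2_length HF). apply Rmult_le_compat_r; lra. }
assert (Hd : Cmod (Cminus (vec idx_eq_dec (op_a q true i) j) (vec idx_eq_dec (op_a q false i) j)) <= 3 * (2 * Kg q * q ^ fst i)).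
{ eapply Rle_trans. apply (vec_diff _ _ _ _ (2 * Kg q * q ^ fst i)). pose proof (pow_le q (fst i) ltac:(lra)); nra.
  eapply Forall2_impl'. exact HF. intros a b Hr; split; apply Hr.
  apply Rmult_le_compat_r. pose proof (pow_le q (fst i) ltac:(lra)); nra. lra. }
assert (Hq : q ^ fst i * q <= q ^ fst j).
{ replace (q ^ fst i * q) with (q ^ S (fst i)) by (simpl; ring). apply qpow_anti; lia || lra. }
assert (Hq2 : q ^ fst i <= q ^ fst j / q).
{ apply (Rmult_le_reg_r q); auto. unfold Rdiv. rewrite Rmult_assoc, Rinv_l; lra. }
assert (Hiq : 1 <= / q). { rewrite <- Rinv_1. apply Rinv_le_contravar; lra. }
unfold Rel; cbn [fst snd]. rewrite !Cmod_conj.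
rewrite <- Cminus_conj, Cmod_conj.
repeat split; auto; unfold Rdiv.
- nra.
- nra.
- pose proof (pow_le q (fst i) ltac:(lra)). apply Rle_trans with (3 * (2 * Kg q * q ^ fst i)); auto.
  replace (6 * Kg q * / q * q ^ fst j) with (6 * Kg q * (q ^ fst j / q)) by (unfold Rdiv; ring). nra.
Qed.

Lemma Cminus_diag (a : C) : Cminus a a = RtoC 0.
Proof. apply injective_projections; simpl; ring. Qed.

Lemma Inv_id q : 0 < q -> Inv q op_id op_id.
Proof. intros hq. exists 0%nat, 1%nat, 1. split. lra. intros j Hv. unfold op_id. split. simpl; lia.
constructor; [|constructor]. unfold Rel; cbn [fst snd]. rewrite Cminus_diag, Cmod_0, Cmod_1.
pose proof (pow_le q (fst j) ltac:(lra)). repeat split; auto; try lia; lra. Qed.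

Lemma Inv_scal q c T T' : 0 < q -> Inv q T T' -> Inv q (op_scal c T) (op_scal c T').
Proof. intros hq [d [L [K [HK H]]]]. exists d, L, (Cmod c * K). split.
pose proof (Cmod_ge_0 c); nra. intros j Hv. destruct (H j Hv) as [Hl HF]. unfold op_scal. split.
rewrite length_map; auto.
eapply Forall2_map'. exact HF. intros a b [H1 [H2 [H3 [H4 [H5 [H6 H7]]]]]].
unfold Rel; cbn [fst snd]. pose proof (Cmod_ge_0 c).
replace (Cminus (Cmult c (snd a)) (Cmult c (snd b))) with (Cmult c (Cminus (snd a) (snd b))) by (unfold Cminus; ring).
rewrite !Cmod_mult. repeat split; auto.
- apply Rmult_le_compat_l; auto.
- apply Rmult_le_compat_l; auto.
- rewrite Rmult_assoc. apply Rmult_le_compat_l; auto.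
Qed.

Lemma Inv_add q S S' T T' : 0 < q -> Inv q S S' -> Inv q T T' -> Inv q (op_add S T) (op_add S' T').
Proof. intros hq [d1 [L1 [K1 [HK1 H1]]]] [d2 [L2 [K2 [HK2 H2]]]].
exists (Nat.max d1 d2), (L1 + L2)%nat, (Rmax K1 K2). split.
eapply Rle_trans; [exact HK1| apply Rmax_l].
intros j Hv. destruct (H1 j Hv) as [Hl1 HF1]. destruct (H2 j Hv) as [Hl2 HF2]. unfold op_add. split.
rewrite length_app; lia.
apply Forall2_app.
- eapply Forall2_impl'. exact HF1. intros a b. apply Rel_mono; auto. lia. apply Rmax_l.
- eapply Forall2_impl'. exact HF2. intros a b. apply Rel_mono; auto. lia. apply Rmax_r.
Qed.

Lemma Inv_comp q S S' T T' : 0 < q -> q < 1 -> Inv q S S' -> Inv q T T' -> Inv q (op_comp S T) (op_comp S' T').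
Proof. intros hq hq1 [dS [LS [KS [HKS HS]]]] [dT [LT [KT [HKT HT]]]].
assert (Hqd : 0 < q ^ dT) by (apply pow_lt; lra).
exists (dS + dT)%nat, (LT * LS)%nat, (KS * KT * (1 + / q ^ dT)). split.
{ assert (0 < / q ^ dT) by (apply Rinv_0_lt_compat; lra). pose proof (Rmult_le_pos _ _ HKS HKT). nra. }
intros j Hv. destruct (HT j Hv) as [HlT HFT]. unfold op_comp. split.
{ eapply Nat.le_trans. apply length_flat_map_le with (M := LS).
  intros a Ha. rewrite length_map.
  assert (Hva : validb (fst a) = true).
  { pose proof (Forall2_Forall_l _ (fun p => validb (fst p) = true) _ _ HFT) as HH.
    assert (HH' : List.Forall (fun p : idx * C => validb (fst p) = true) (T j)) by (apply HH; intros x y Hr; apply Hr).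
    rewrite List.Forall_forall in HH'. apply HH'; auto. }
  apply (HS (fst a) Hva).
  apply Nat.mul_le_mono_r; auto. }
eapply Forall2_flat_map'. exact HFT.
intros p p' [Hf [Hvp [B1 [B2 [Hc1 [Hc2 Hd]]]]]].
destruct (HS (fst p) Hvp) as [_ HFS]. rewrite <- Hf.
eapply Forall2_map'. exact HFS.
intros r r' [Gf [Gv [C1 [C2 [Gc1 [Gc2 Gd]]]]]].
unfold Rel; cbn [fst snd].
pose proof (Cmod_ge_0 (snd p)). pose proof (Cmod_ge_0 (snd p')).
pose proof (Cmod_ge_0 (snd r)). pose proof (Cmod_ge_0 (snd r')).
assert (Hinv : 0 < / q ^ dT) by (apply Rinv_0_lt_compat; lra).
assert (HKK : KS * KT <= KS * KT * (1 + / q ^ dT)) by (pose proof (Rmult_le_pos _ _ HKS HKT); nra).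
assert (Hqp : q ^ fst (fst p) <= q ^ fst j * / q ^ dT).
{ apply (Rmult_le_reg_r (q ^ dT)); auto. rewrite Rmult_assoc, Rinv_l, Rmult_1_r by lra. rewrite <- pow_add.
  apply qpow_anti; lia || lra. }
repeat split; auto; try lia.
- rewrite Cmod_mult. eapply Rle_trans; [|exact HKK]. rewrite (Rmult_comm KS). apply Rmult_le_compat; auto.
- rewrite Cmod_mult. eapply Rle_trans; [|exact HKK]. rewrite (Rmult_comm KS). apply Rmult_le_compat; auto.
- replace (Cminus (Cmult (snd p) (snd r)) (Cmult (snd p') (snd r')))
    with (Cplus (Cmult (snd p) (Cminus (snd r) (snd r'))) (Cmult (Cminus (snd p) (snd p')) (snd r'))) by (unfold Cminus; ring).
  eapply Rle_trans. apply Cmod_triangle. rewrite !Cmod_mult.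
  pose proof (Cmod_ge_0 (Cminus (snd r) (snd r'))). pose proof (Cmod_ge_0 (Cminus (snd p) (snd p'))).
  pose proof (pow_le q (fst (fst p)) ltac:(lra)). pose proof (pow_le q (fst j) ltac:(lra)).
  assert (X1 : Cmod (snd p) * Cmod (Cminus (snd r) (snd r')) <= KT * (KS * (q ^ fst j * / q ^ dT))).
  { apply Rmult_le_compat; auto. eapply Rle_trans. exact Gd. apply Rmult_le_compat_l; auto. }
  assert (X2 : Cmod (Cminus (snd p) (snd p')) * Cmod (snd r') <= KT * q ^ fst j * KS).
  { apply Rmult_le_compat; auto. }
  replace (KS * KT * (1 + / q ^ dT) * q ^ fst j) with (KT * (KS * (q ^ fst j * / q ^ dT)) + KT * q ^ fst j * KS) by ring.
  lra.
Qed.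

Lemma Inv_pi q : 0 < q -> q < 1 -> forall x, Inv q (pi_s q true x) (pi_s q false x).
Proof. intros hq0 hq1 x. unfold pi_s. induction x as [|g|c y IH|y IHy z IHz|y IHy z IHz]; simpl.
- apply Inv_id; auto.
- destruct g; simpl. apply Inv_a'; auto. apply Inv_astar; auto. apply Inv_b; auto.
- apply Inv_scal; auto.
- apply Inv_add; auto.
- apply Inv_comp; auto.
Qed.

Lemma bern h N : 0 <= h -> 1 + INR N * h <= (1 + h) ^ N.
Proof. intros Hh. induction N. simpl; lra. rewrite S_INR. simpl.
pose proof (pos_INR N). nra. Qed.

Lemma lin_geom r : 0 < r -> r < 1 -> exists M, 0 <= M /\ forall N, INR (S N) * r ^ N <= M.
Proof. intros H0 H1. set (h := / r - 1).
assert (Hh : 0 < h). { unfold h. assert (1 < / r) by (rewrite <- Rinv_1; apply Rinv_lt_contravar; lra). lra. }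
exists (1 + / h). split. assert (0 < / h) by (apply Rinv_0_lt_compat; lra). lra.
intros N. pose proof (bern h N ltac:(lra)).
assert (E1 : r ^ N * (1 + h) ^ N = 1).
{ rewrite <- Rpow_mult_distr. replace (r * (1 + h)) with 1 by (unfold h; field; lra). apply pow1. }
pose proof (pos_INR N). pose proof (pow_lt r N H0). rewrite S_INR.
assert (0 < (1 + h) ^ N) by (apply pow_lt; lra).
assert (INR N + 1 <= (1 + / h) * (1 + INR N * h)).
{ replace ((1 + / h) * (1 + INR N * h)) with (1 + INR N * h + / h + INR N) by (field; lra).
  assert (0 < / h) by (apply Rinv_0_lt_compat; lra). nra. }
assert (0 < / h) by (apply Rinv_0_lt_compat; lra).
apply (Rmult_le_reg_r ((1 + h) ^ N)); auto.
rewrite Rmult_assoc, E1. nra. Qed.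

Lemma poly_geom p : forall r, 0 < r -> r < 1 -> exists M, 0 <= M /\ forall N, INR (S N) ^ p * r ^ N <= M.
Proof. induction p as [|p IH]; intros r H0 H1.
- exists 1. split. lra. intros N. simpl. rewrite Rmult_1_l. apply qpow_le1; lra.
- set (s := sqrt r).
  assert (Hs0 : 0 < s) by (apply sqrt_lt_R0; lra).
  assert (Hs1 : s < 1) by (unfold s; rewrite <- sqrt_1; apply sqrt_lt_1_alt; lra).
  destruct (IH s Hs0 Hs1) as [M1 [HM1 B1]]. destruct (lin_geom s Hs0 Hs1) as [M2 [HM2 B2]].
  exists (M1 * M2). split. nra. intros N.
  assert (E1 : r ^ N = s ^ N * s ^ N) by (rewrite <- Rpow_mult_distr; unfold s; rewrite sqrt_sqrt by lra; auto).
  rewrite E1. rewrite <- tech_pow_Rmult.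
  replace (INR (S N) * INR (S N) ^ p * (s ^ N * s ^ N)) with ((INR (S N) ^ p * s ^ N) * (INR (S N) * s ^ N)) by ring.
  pose proof (B1 N). pose proof (B2 N). pose proof (pow_lt s N Hs0). pose proof (pos_INR (S N)) as HN.
  pose proof (pow_le (INR (S N)) p HN).
  apply Rmult_le_compat; try nra.
Qed.

Lemma entry_rho q x i j : entry idx_eq_dec (rho_minus q x) i j =
  Cmult (RtoC (/2)) (Cminus (entry idx_eq_dec (pi_s q true x) i j) (entry idx_eq_dec (pi_s q false x) i j)).
Proof. unfold rho_minus. rewrite entry_scal, entry_add, entry_scal. unfold Cminus. f_equal.
f_equal. apply injective_projections; simpl; ring. Qed.

Lemma rho_bound q : 0 < q -> q < 1 -> forall x, exists d Cb, 0 <= Cb /\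
  forall i j, validb i = true -> validb j = true ->
  Cmod (entry idx_eq_dec (rho_minus q x) i j) <= Cb * q ^ (fst j) /\
  ((fst j + d < fst i)%nat -> entry idx_eq_dec (rho_minus q x) i j = RtoC 0).
Proof. intros hq0 hq1 x. destruct (Inv_pi q hq0 hq1 x) as [d [L [K [HK HI]]]].
exists d, (/2 * (INR L * K)). split. pose proof (pos_INR L). assert (0 <= INR L * K) by nra. lra.
intros i j Hvi Hvj. destruct (HI j Hvj) as [Hl HF]. rewrite entry_rho, !entry_vec. split.
- rewrite Cmod_mult, Cmod_R, Rabs_right by lra.
  pose proof (pow_le q (fst j) ltac:(lra)).
  assert (Cmod (Cminus (vec idx_eq_dec (pi_s q true x j) i) (vec idx_eq_dec (pi_s q false x j) i)) <= INR L * (K * q ^ fst j)).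
  { eapply Rle_trans. apply (vec_diff _ _ _ _ (K * q ^ fst j)). nra.
    eapply Forall2_impl'. exact HF. intros a b Hr; split; apply Hr.
    apply Rmult_le_compat_r. nra. apply le_INR; auto. }
  nra.
- intros Hlt.
  rewrite (vec_zero _ (pi_s q true x j)), (vec_zero _ (pi_s q false x j)).
  apply injective_projections; simpl; ring.
  + eapply Forall2_Forall_r. exact HF. intros a b [Hf [_ [B1 _]]]. rewrite <- Hf. intros E. subst. lia.
  + eapply Forall2_Forall_l. exact HF. intros a b [Hf [_ [B1 _]]]. intros E. subst. lia.
Qed.

Lemma part1 q : 0 < q -> q < 1 -> forall x, rapid_decay (rho_minus q x).
Proof. intros hq0 hq1 x. destruct (rho_bound q hq0 hq1 x) as [d [Cb [HC HB]]].
intros p. destruct (poly_geom p q hq0 hq1) as [M [HM BM]].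
exists (Cb * (INR d + 2) ^ p * M). intros i j Hvi Hvj.
destruct (HB i j Hvi Hvj) as [B1 B2].
pose proof (pos_INR d) as Hd.
assert (Hdp : 0 <= (INR d + 2) ^ p) by (apply pow_le; lra).
assert (0 <= Cb * (INR d + 2) ^ p * M) by (apply Rmult_le_pos; [apply Rmult_le_pos|]; lra).
unfold lval.
destruct (Nat.lt_ge_cases (fst j + d) (fst i)) as [Hlt|Hge].
- rewrite (B2 Hlt), Cmod_0, Rmult_0_l. auto.
- assert (Hs : 0 <= INR (fst i) + / 2 + (INR (fst j) + / 2) + 1 <= (INR d + 2) * INR (S (fst j))).
  { apply le_INR in Hge. rewrite plus_INR in Hge. rewrite S_INR. pose proof (pos_INR (fst i)). pose proof (pos_INR (fst j)). nra. }
  assert (Hpp : (INR (fst i) + / 2 + (INR (fst j) + / 2) + 1) ^ p <= (INR d + 2) ^ p * INR (S (fst j)) ^ p).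
  { rewrite <- Rpow_mult_distr. apply pow_incr. lra. }
  pose proof (BM (fst j)).
  pose proof (Cmod_ge_0 (entry idx_eq_dec (rho_minus q x) i j)).
  pose proof (pow_le (INR (fst i) + / 2 + (INR (fst j) + / 2) + 1) p ltac:(lra)).
  pose proof (pow_le q (fst j) ltac:(lra)).
  pose proof (pow_le (INR (S (fst j))) p (pos_INR _)).
  apply Rle_trans with (Cb * q ^ fst j * ((INR d + 2) ^ p * INR (S (fst j)) ^ p)).
  apply Rmult_le_compat; auto.
  replace (Cb * q ^ fst j * ((INR d + 2) ^ p * INR (S (fst j)) ^ p)) with
    (Cb * (INR d + 2) ^ p * (INR (S (fst j)) ^ p * q ^ fst j)) by ring.
  apply Rmult_le_compat_l. apply Rmult_le_pos; lra. auto.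
Qed.

Lemma In_block n (i : idx) : In i (block n) <-> fst i = n /\ validb i = true.
Proof. unfold block, validb. rewrite in_map_iff. split.
- intros [j [Hj Hin]]. apply in_seq in Hin. subst i; simpl. split; auto.
  apply andb_true_intro; split; apply Z.leb_le; lia.
- destruct i as [m k]; simpl. intros [-> H]. apply andb_prop in H. destruct H as [H1 H2].
  apply Z.leb_le in H1, H2. exists (Z.to_nat (k + Z.of_nat n + 1)). split.
  f_equal. lia. apply in_seq. lia.
Qed.

Lemma In_block2 n (i : idx2) : In i (block2 n) <-> fst (fst i) = n /\ validb (fst i) = true.
Proof. unfold block2. rewrite in_flat_map. destruct i as [i1 t]; simpl. split.
- intros [x [Hx Hin]]. apply In_block in Hx. destruct Hin as [H|[H|[]]]; injection H; intros; subst; auto.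
- intros H. exists i1. split. apply In_block; auto. destruct t; simpl; auto.
Qed.

Lemma NoDup_block n : NoDup (block n).
Proof. unfold block. apply NoDup_map_NoDup_ForallPairs. 2: apply seq_NoDup.
intros a b _ _ H. injection H. lia. Qed.

Lemma NoDup_flat_map {A B} (f : A -> list B) l :
  NoDup l -> (forall x, NoDup (f x)) -> (forall x y z, In z (f x) -> In z (f y) -> x = y) -> NoDup (flat_map f l).
Proof. induction 1 as [|x l Hx Hl IH]; simpl; intros Hf Hd. constructor.
apply NoDup_app; auto. intros z Hz1 Hz2. apply in_flat_map in Hz2. destruct Hz2 as [y [Hy Hz]].
assert (x = y) by (eapply Hd; eauto). subst. contradiction. Qed.

Lemma NoDup_block2 n : NoDup (block2 n).
Proof. unfold block2. apply NoDup_flat_map. apply NoDup_block.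
intros x. constructor. simpl. intros [H|[]]. discriminate. constructor. simpl; auto. constructor.
intros x y z H1 H2. destruct H1 as [H1|[H1|[]]]; destruct H2 as [H2|[H2|[]]]; subst; injection H2; auto.
Qed.

Definition LL (K : nat) : list idx2 := flat_map block2 (seq 0 K).

Lemma NoDup_LL K : NoDup (LL K).
Proof. unfold LL. apply NoDup_flat_map. apply seq_NoDup. apply NoDup_block2.
intros x y z H1 H2. apply In_block2 in H1. apply In_block2 in H2. destruct H1 as [A1 _], H2 as [A2 _]. congruence. Qed.

Lemma In_LL K i : In i (LL K) <-> (fst (fst i) < K)%nat /\ validb (fst i) = true.
Proof. unfold LL. rewrite in_flat_map. split.
- intros [x [Hx Hi]]. apply in_seq in Hx. apply In_block2 in Hi. destruct Hi as [Hi1 Hi2]. split; auto. lia.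
- intros [H1 H2]. exists (fst (fst i)). split. apply in_seq; lia. apply In_block2; auto. Qed.

Lemma length_block2 n : length (block2 n) = (4 * n + 4)%nat.
Proof. unfold block2, block. induction (seq 0 (2 * n + 2)) as [|a l IH] eqn:E.
Abort.

Lemma length_block2 n : length (block2 n) = (4 * n + 4)%nat.
Proof. unfold block2. rewrite length_flat_map.
assert (forall l : list idx, list_sum (map (fun x => length [(x, true); (x, false)]) l) = (2 * length l)%nat).
{ induction l; simpl. lia. unfold list_sum in *; simpl in *. lia. } rewrite H. unfold block. rewrite length_map, length_seq. lia. Qed.

Lemma LL_app K K' : LL (K + K') = LL K ++ flat_map block2 (seq K K').
Proof. unfold LL. rewrite seq_app, flat_map_app. reflexivity. Qed.

Lemma length_LL K : (K <= length (LL K))%nat.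
Proof. induction K. simpl; lia. replace (S K) with (K + 1)%nat by lia. rewrite LL_app, length_app.
simpl. rewrite app_nil_r, length_block2. lia. Qed.

Definition dflt : idx2 := ((0%nat, 0%Z), true).
Definition enum (n : nat) : idx2 := nth n (LL (S n)) dflt.

Lemma nth_LL n K : (n < K)%nat -> nth n (LL K) dflt = enum n.
Proof. intros H. unfold enum.
assert (Hn : (n < length (LL (S n)))%nat) by (pose proof (length_LL (S n)); lia).
destruct (Nat.le_ge_cases K (S n)) as [H1|H1].
- replace (S n) with (K + (S n - K))%nat by lia. rewrite LL_app, app_nth1; auto.
  pose proof (length_LL K); lia.
- replace K with (S n + (K - S n))%nat by lia. rewrite LL_app, app_nth1; auto.
Qed.

Lemma enum_In n : In (enum n) (LL (S n)).
Proof. unfold enum. apply nth_In. pose proof (length_LL (S n)); lia. Qed.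

Lemma enum_valid n : validb (fst (enum n)) = true.
Proof. pose proof (enum_In n). apply In_LL in H. apply H. Qed.

Lemma enum_surj j : validb (fst j) = true -> exists n0, enum n0 = j /\ forall n, enum n = j -> n = n0.
Proof. intros Hv. assert (Hin : In j (LL (S (fst (fst j))))) by (apply In_LL; split; auto).
apply (In_nth _ _ dflt) in Hin. destruct Hin as [n0 [Hn0 Hj]].
exists n0. split.
- rewrite <- (nth_LL n0 (S (fst (fst j)) + S n0)%nat) by lia.
  rewrite LL_app, app_nth1; auto.
- intros n Hn. pose proof (NoDup_LL (S n + S n0 + S (fst (fst j)))) as ND.
  rewrite (NoDup_nth _ dflt) in ND.
  apply ND.
  + pose proof (length_LL (S n + S n0 + S (fst (fst j)))); lia.
  + pose proof (length_LL (S n + S n0 + S (fst (fst j)))); lia.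
  + rewrite !nth_LL by lia. rewrite Hn. rewrite <- Hj.
    rewrite <- (nth_LL n0 (S (fst (fst j)) + S n0)) by lia. rewrite LL_app, app_nth1; auto.
Qed.

Lemma ex_series_bounded (a : nat -> R) B : (forall n, 0 <= a n) -> (forall M, sum_n a M <= B) -> ex_series a.
Proof. intros H0 HB. destruct (ex_finite_lim_seq_incr (sum_n a) B) as [l Hl].
- intros n. rewrite sum_Sn. pose proof (H0 (S n)). unfold plus; simpl. lra.
- auto.
- exists l. exact Hl.
Qed.

Lemma sum_n_tail {G : AbelianMonoid} (a : nat -> G) N0 : (forall n, (N0 < n)%nat -> a n = zero) ->
  forall k, sum_n a (N0 + k) = sum_n a N0.
Proof. intros H k. induction k. rewrite Nat.add_0_r; auto.
rewrite Nat.add_succ_r, sum_Sn, IHk, H by lia. apply plus_zero_r. Qed.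

Lemma is_series_finite {K : AbsRing} {V : NormedModule K} (a : nat -> V) N0 :
  (forall n, (N0 < n)%nat -> a n = zero) -> is_series a (sum_n a N0).
Proof. intros H. unfold is_series. eapply filterlim_ext_loc. 2: apply filterlim_const.
exists N0. intros M HM. replace M with (N0 + (M - N0))%nat by lia. symmetry. apply sum_n_tail; auto. Qed.

Lemma sum_n_single {G : AbelianMonoid} (a : nat -> G) N0 : (forall n, n <> N0 -> a n = zero) ->
  forall M, sum_n a M = if le_dec N0 M then a N0 else zero.
Proof. intros H M. induction M.
- rewrite sum_O. destruct (le_dec N0 0). replace N0 with 0%nat by lia. auto. apply H. lia.
- rewrite sum_Sn, IHM. destruct (le_dec N0 M), (le_dec N0 (S M)); try lia.
  + rewrite (H (S M)) by lia. apply plus_zero_r.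
  + replace N0 with (S M) by lia. apply plus_zero_l.
  + rewrite (H (S M)) by lia. apply plus_zero_l.
Qed.

Definition lsum {A} (f : A -> R) (l : list A) : R := fold_right Rplus 0 (map f l).

Lemma lsum_app {A} (f : A -> R) l1 l2 : lsum f (l1 ++ l2) = lsum f l1 + lsum f l2.
Proof. unfold lsum. induction l1; simpl; [ring|]. rewrite IHl1; ring. Qed.

Lemma lsum_nonneg {A} (f : A -> R) l : (forall x, 0 <= f x) -> 0 <= lsum f l.
Proof. intros H. unfold lsum; induction l; simpl. lra. pose proof (H a); lra. Qed.

Lemma lsum_firstn_le {A} (f : A -> R) l k : (forall x, 0 <= f x) -> lsum f (firstn k l) <= lsum f l.
Proof. intros H. revert k; induction l; intros k; destruct k; simpl; unfold lsum in *; simpl; try lra.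
- pose proof (lsum_nonneg f (a :: l) H). unfold lsum in H0; simpl in H0; lra.
- specialize (IHl k). lra. Qed.

Lemma lsum_flat_map {A B} (f : B -> R) (g : A -> list B) l :
  lsum f (flat_map g l) = lsum (fun x => lsum f (g x)) l.
Proof. induction l; simpl. reflexivity. rewrite lsum_app, IHl. reflexivity. Qed.

Lemma lsum_bound {A} (f : A -> R) l B : (forall x, In x l -> f x <= B) -> lsum f l <= INR (length l) * B.
Proof. unfold lsum. induction l; cbn [length map fold_right]; intros H. simpl; lra. rewrite S_INR.
specialize (IHl (fun x h => H x (or_intror h))). specialize (H a (or_introl eq_refl)). simpl. lra. Qed.

Lemma lsum_const_on {A} (f : A -> R) l c : (forall x, In x l -> f x = c) -> lsum f l = INR (length l) * c.
Proof. unfold lsum. induction l; cbn [length map fold_right]; intros H. simpl; lra. rewrite S_INR.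
rewrite IHl by (intros; apply H; simpl; auto). rewrite (H a) by (simpl; auto). ring. Qed.

Lemma lsum_zero {A} (f : A -> R) l : (forall x, In x l -> f x = 0) -> lsum f l = 0.
Proof. intros H. rewrite (lsum_const_on f l 0 H). ring. Qed.

Lemma lsum_indicator {A} (dec : forall x y : A, {x = y} + {x <> y}) (l : list A) (a : A) :
  NoDup l -> In a l -> lsum (fun x => if dec x a then 1 else 0) l = 1.
Proof. unfold lsum. induction 1 as [|x l Hx Hl IH]; simpl; intros Hin. contradiction.
destruct (dec x a) as [E|E].
- subst. fold (lsum (fun x => if dec x a then 1 else 0) l).
  rewrite lsum_zero. ring. intros y Hy. destruct (dec y a); subst; auto. contradiction.
- destruct Hin as [H|H]. congruence. rewrite IH; auto. ring. Qed.

Lemma firstn_S_nth {A} (l : list A) n d : (n < length l)%nat -> firstn (S n) l = firstn n l ++ [nth n l d].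
Proof. revert n; induction l; intros n H; simpl in *. lia. destruct n. reflexivity.
simpl. rewrite <- IHl by lia. reflexivity. Qed.

Lemma sum_n_nth {A} (f : A -> R) (L : list A) d M : (M < length L)%nat ->
  sum_n (fun n => f (nth n L d)) M = lsum f (firstn (S M) L).
Proof. induction M; intros H.
- rewrite sum_O. destruct L; simpl in *. lia. unfold lsum; simpl; ring.
- rewrite sum_Sn, IHM by lia. rewrite (firstn_S_nth L (S M) d) by lia. rewrite lsum_app.
  unfold lsum at 3; simpl. unfold plus; simpl. ring. Qed.

Lemma geom_seq s a K : 0 <= s < 1 -> lsum (fun N => s ^ N) (seq a K) <= s ^ a / (1 - s).
Proof. intros Hs. revert a; induction K; intros a; simpl; unfold lsum in *; simpl.
- apply Rdiv_le_0_compat. apply pow_le; lra. lra.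
- specialize (IHK (S a)). simpl in IHK.
  replace (s ^ a / (1 - s)) with (s ^ a + s * s ^ a / (1 - s)) by (field; lra). lra. Qed.

Lemma sum_n_le' (a b : nat -> R) M : (forall n, (n <= M)%nat -> a n <= b n) -> sum_n a M <= sum_n b M.
Proof. induction M; intros H. rewrite !sum_O; auto.
rewrite !sum_Sn. unfold plus; simpl. pose proof (H (S M) ltac:(lia)). pose proof (IHM (fun n h => H n ltac:(lia))). lra. Qed.

Lemma lsum_le {A} (f g : A -> R) l : (forall x, In x l -> f x <= g x) -> lsum f l <= lsum g l.
Proof. unfold lsum; induction l; simpl; intros H. lra.
pose proof (H a (or_introl eq_refl)). pose proof (IHl (fun x h => H x (or_intror h))). lra. Qed.

Lemma lsum_ext {A} (f g : A -> R) l : (forall x, In x l -> f x = g x) -> lsum f l = lsum g l.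
Proof. unfold lsum; induction l; simpl; intros H. lra.
rewrite (H a (or_introl eq_refl)), (IHl (fun x h => H x (or_intror h))). reflexivity. Qed.

Lemma lsum_scal {A} (f : A -> R) c l : lsum (fun x => c * f x) l = c * lsum f l.
Proof. unfold lsum; induction l; simpl. ring. rewrite IHl; ring. Qed.

Definition uu (T : op idx2) (n : nat) : idx2 -> C := fun i => entry idx2_eq_dec T i (enum n).
Definition vv (n : nat) : idx2 -> C := fun j => if idx2_eq_dec j (enum n) then RtoC 1 else RtoC 0.

Lemma bn_def (w : idx2 -> C) N : blocknorm2 block2 w N = lsum (fun i => Cmod (w i) ^ 2) (block2 N).
Proof. reflexivity. Qed.

Lemma vv_series n : is_series (blocknorm2 block2 (vv n)) 1.
Proof. set (N0 := fst (fst (enum n))).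
assert (Hz : forall N, N <> N0 -> blocknorm2 block2 (vv n) N = 0).
{ intros N HN. rewrite bn_def. apply lsum_zero. intros i Hi. apply In_block2 in Hi. unfold vv.
  destruct (idx2_eq_dec i (enum n)). subst. exfalso; apply HN; destruct Hi as [A _]; rewrite <- A; reflexivity. rewrite Cmod_0. ring. }
assert (H1 : blocknorm2 block2 (vv n) N0 = 1).
{ rewrite bn_def. rewrite (lsum_ext _ (fun i => if idx2_eq_dec i (enum n) then 1 else 0)).
  apply lsum_indicator. apply NoDup_block2. apply In_block2. split; auto. apply enum_valid.
  intros i _. unfold vv. destruct (idx2_eq_dec i (enum n)). rewrite Cmod_1; ring. rewrite Cmod_0; ring. }
assert (Hz' : forall m, (N0 < m)%nat -> blocknorm2 block2 (vv n) m = zero) by (intros m Hm; apply Hz; lia).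
pose proof (is_series_finite (K:=R_AbsRing) (V:=R_NormedModule) (blocknorm2 block2 (vv n)) N0 Hz') as HS.
rewrite (sum_n_single _ N0) in HS. destruct (le_dec N0 N0); [|lia]. rewrite H1 in HS. exact HS.
intros m Hm. apply Hz; auto.
Qed.

Lemma l2norm_vv n : l2norm block2 (vv n) = 1.
Proof. unfold l2norm. rewrite (is_series_unique _ 1 (vv_series n)). apply sqrt_1. Qed.

Definition THyp (q : R) (T : op idx2) (d : nat) (Cb : R) : Prop :=
  forall i j, validb (fst i) = true -> validb (fst j) = true ->
  Cmod (entry idx2_eq_dec T i j) <= Cb * q ^ (fst (fst j)) /\
  ((fst (fst j) + d < fst (fst i))%nat -> entry idx2_eq_dec T i j = RtoC 0).

Lemma uu_series q T d Cb : 0 < q -> 0 <= Cb -> THyp q T d Cb -> forall n,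
  ex_series (blocknorm2 block2 (uu T n)) /\
  Series (blocknorm2 block2 (uu T n)) <= (2 * INR (S (fst (fst (enum n)) + d)) * (Cb * q ^ fst (fst (enum n)))) ^ 2.
Proof. intros hq HC HT n. set (Nj := fst (fst (enum n))). set (N0 := (Nj + d)%nat).
set (X := Cb * q ^ Nj).
assert (HX : 0 <= X) by (unfold X; pose proof (pow_le q Nj ltac:(lra)); nra).
assert (Hz : forall m, (N0 < m)%nat -> blocknorm2 block2 (uu T n) m = zero).
{ intros m Hm. change (blocknorm2 block2 (uu T n) m = 0). rewrite bn_def. apply lsum_zero. intros i Hi.
  apply In_block2 in Hi. destruct Hi as [Hi1 Hi2]. unfold uu.
  rewrite (proj2 (HT i (enum n) Hi2 (enum_valid n))). rewrite Cmod_0; ring. unfold N0, Nj in *; lia. }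
pose proof (is_series_finite (K:=R_AbsRing) (V:=R_NormedModule) _ N0 Hz) as HS.
split. eexists; exact HS.
rewrite (is_series_unique _ _ HS).
apply Rle_trans with (sum_n (fun _ => INR (4 * N0 + 4) * X ^ 2) N0).
- apply sum_n_le'. intros m Hm. rewrite bn_def.
  eapply Rle_trans. apply (lsum_bound _ _ (X ^ 2)).
  + intros i Hi. apply In_block2 in Hi. destruct Hi as [Hi1 Hi2]. unfold uu.
    pose proof (proj1 (HT i (enum n) Hi2 (enum_valid n))). pose proof (Cmod_ge_0 (entry idx2_eq_dec T i (enum n))).
    apply pow_incr. fold Nj in H. fold X in H. lra.
  + rewrite length_block2. apply Rmult_le_compat_r. apply pow_le; lra. apply le_INR; lia.
- rewrite sum_n_const. replace (4 * N0 + 4)%nat with (4 * S N0)%nat by lia. rewrite mult_INR.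
  right. simpl. ring.
Qed.

Lemma in_basis_valid i : in_basis block2 i -> validb (fst i) = true.
Proof. intros [N H]. apply In_block2 in H. apply H. Qed.

Lemma TC q T d Cb : 0 < q -> q < 1 -> 0 <= Cb -> THyp q T d Cb -> trace_class_H T.
Proof. intros hq0 hq1 HC HT. unfold trace_class_H, trace_class.
exists (uu T), vv. split; [|split; [|split]].
- intros n. apply (uu_series q T d Cb hq0 HC HT n).
- intros n. eexists. apply vv_series.
- set (s := sqrt q).
  assert (Hs0 : 0 < s) by (apply sqrt_lt_R0; lra).
  assert (Hs1 : s < 1) by (unfold s; rewrite <- sqrt_1; apply sqrt_lt_1_alt; lra).
  assert (Hss : forall N, q ^ N = s ^ N * s ^ N).
  { intros N. rewrite <- Rpow_mult_distr. unfold s. rewrite sqrt_sqrt by lra. auto. }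
  destruct (poly_geom 2 s Hs0 Hs1) as [M2 [HM2 BM2]].
  pose proof (pos_INR d) as Hd.
  set (G := fun N : nat => 2 * Cb * (INR d + 1) * INR (S N) * q ^ N).
  assert (HG0 : forall N, 0 <= G N).
  { intros N. unfold G. pose proof (pos_INR (S N)). pose proof (pow_le q N ltac:(lra)).
    repeat apply Rmult_le_pos; lra. }
  assert (Ha : forall n, l2norm block2 (uu T n) * l2norm block2 (vv n) <= G (fst (fst (enum n)))).
  { intros n. rewrite l2norm_vv, Rmult_1_r. unfold l2norm.
    destruct (uu_series q T d Cb hq0 HC HT n) as [_ HB].
    set (Nj := fst (fst (enum n))) in *.
    pose proof (pow_le q Nj ltac:(lra)). pose proof (pos_INR (S (Nj + d))).
    eapply Rle_trans. apply sqrt_le_1_alt. exact HB. rewrite sqrt_pow2.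
    2:{ repeat apply Rmult_le_pos; lra. }
    unfold G. assert (INR (S (Nj + d)) <= (INR d + 1) * INR (S Nj)).
    { rewrite !S_INR, plus_INR. pose proof (pos_INR Nj). nra. }
    assert (0 <= Cb * q ^ Nj) by nra. nra. }
  apply ex_series_bounded with (B := 8 * Cb * (INR d + 1) * M2 * (1 / (1 - s))).
  { intros n. apply Rmult_le_pos; unfold l2norm; apply sqrt_pos. }
  intros M.
  apply Rle_trans with (sum_n (fun n => G (fst (fst (nth n (LL (S M)) dflt)))) M).
  { apply sum_n_le'. intros n Hn. rewrite nth_LL by lia. apply Ha. }
  assert (HLM : (M < length (LL (S M)))%nat) by (pose proof (length_LL (S M)); lia).
  pose proof (sum_n_nth (fun i => G (fst (fst i))) (LL (S M)) dflt M HLM) as EE. cbv beta in EE.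
  set (P := sum_n _ M) in *.
  assert (EE' : P = lsum (fun i => G (fst (fst i))) (firstn (S M) (LL (S M)))) by exact EE.
  rewrite EE'.
  eapply Rle_trans. apply lsum_firstn_le. intros x; apply HG0.
  unfold LL. rewrite lsum_flat_map.
  rewrite (lsum_ext _ (fun N => INR (4 * N + 4) * G N)).
  2:{ intros N _. rewrite <- length_block2. apply lsum_const_on. intros i Hi. apply In_block2 in Hi.
      destruct Hi as [Hi _]. cbv beta. f_equal. exact Hi. }
  eapply Rle_trans. apply (lsum_le _ (fun N => (8 * Cb * (INR d + 1) * M2) * s ^ N)).
  { intros N _. unfold G. rewrite Hss.
    replace (INR (4 * N + 4)) with (4 * INR (S N)) by (rewrite S_INR, plus_INR, mult_INR; simpl; ring).
    pose proof (BM2 N). pose proof (pow_lt s N Hs0). pose proof (pos_INR (S N)).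
    replace (4 * INR (S N) * (2 * Cb * (INR d + 1) * INR (S N) * (s ^ N * s ^ N)))
      with ((8 * Cb * (INR d + 1)) * (INR (S N) ^ 2 * s ^ N) * s ^ N) by ring.
    apply Rmult_le_compat_r. lra. apply Rmult_le_compat_l. repeat apply Rmult_le_pos; lra. auto. }
  rewrite lsum_scal. apply Rmult_le_compat_l.
  { repeat apply Rmult_le_pos; lra. }
  eapply Rle_trans. apply geom_seq. lra. simpl. lra.
- intros i j Hi Hj. apply in_basis_valid in Hi. apply in_basis_valid in Hj.
  destruct (enum_surj j Hj) as [n0 [E0 U0]].
  set (b := fun n => Cmult (uu T n i) (Cconj (vv n j))).
  assert (Hz : forall n, n <> n0 -> b n = zero).
  { intros n Hn. unfold b, vv. destruct (idx2_eq_dec j (enum n)) as [E|E].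
    exfalso; apply Hn; apply U0; auto.
    apply injective_projections; simpl; ring. }
  assert (Hz' : forall n, (n0 < n)%nat -> b n = zero) by (intros n Hn; apply Hz; lia).
  pose proof (is_series_finite (K:=C_AbsRing) (V:=C_NormedModule) b n0 Hz') as HS.
  rewrite (sum_n_single _ n0) in HS by exact Hz. destruct (le_dec n0 n0); [|lia].
  assert (Hb : b n0 = entry idx2_eq_dec T i j).
  { unfold b, vv, uu. rewrite E0. destruct (idx2_eq_dec j j); [|congruence].
    apply injective_projections; simpl; ring. }
  rewrite Hb in HS. exact HS.
Qed.

Lemma entry_comp_id {I} eqd (T : op I) i j : entry eqd (op_comp T op_id) i j = entry eqd T i j.
Proof. rewrite entry_comp. unfold op_id, csum. cbn [map fold_right fst snd].
apply injective_projections; simpl; ring. Qed.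

Lemma comm_THyp q : 0 < q -> q < 1 -> forall x, exists d Cb, 0 <= Cb /\ THyp q (op_comm FH (piH q x)) d Cb.
Proof. intros hq0 hq1 x. destruct (rho_bound q hq0 hq1 x) as [d [Cb [HC HB]]].
exists d, (2 * Cb). split. lra. intros [i1 t] [j1 t'] Hi Hj. cbn [fst] in *.
rewrite part2, entry_scal, (entry_tensor _ _ _ idx_eq_dec Bool.bool_dec), entry_Fg.
destruct (HB i1 j1 Hi Hj) as [B1 B2]. split.
- rewrite !Cmod_mult, Cmod_R, Rabs_right by lra.
  assert (Cmod (if Bool.bool_dec (negb t') t then RtoC (if t' then 1 else -1) else RtoC 0) <= 1).
  { destruct (Bool.bool_dec (negb t') t). destruct t'; rewrite Cmod_R; rewrite ?Rabs_R1, ?Rabs_m1; lra.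
    rewrite Cmod_0; lra. }
  pose proof (Cmod_ge_0 (entry idx_eq_dec (rho_minus q x) i1 j1)).
  pose proof (Cmod_ge_0 (if Bool.bool_dec (negb t') t then RtoC (if t' then 1 else -1) else RtoC 0)).
  nra.
- intros Hlt. rewrite B2 by auto. apply injective_projections; simpl; ring.
Qed.

Theorem mainTheorem8 (q : R) (hq0 : 0 < q) (hq1 : q < 1) :
  (forall x : AS2, rapid_decay (rho_minus q x)) /\
  (forall (x : AS2) (i j : idx2), validb (fst i) = true -> validb (fst j) = true ->
     entry idx2_eq_dec (op_comm FH (piH q x)) i j =
     entry idx2_eq_dec
       (op_scal (RtoC 2) (op_tensor (rho_minus q x) (op_comp F2 gamma2))) i j) /\
  (forall x : AS2, trace_class_H (op_comm FH (piH q x))) /\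
  finite_summable q.
Proof.
split; [|split; [|split]].
- apply part1; auto.
- intros x i j _ _. apply part2.
- intros x. destruct (comm_THyp q hq0 hq1 x) as [d [Cb [HC HT]]]. eapply TC; eauto.
- exists 0%nat. intros xs Hl. destruct xs as [|x [|y xs]]; simpl in Hl; try discriminate.
  destruct (comm_THyp q hq0 hq1 x) as [d [Cb [HC HT]]].
  apply (TC q _ d Cb hq0 hq1 HC). intros i j Hi Hj. unfold comm_prod; simpl.
  rewrite entry_comp_id. apply HT; auto.
Qed.
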